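(* Let $K$ be a Markov kernel on $\mathbb{R}$ such that $Kf\in\mathcal{C}_0(\mathbb{R})$ for every $f\in\mathcal{C}_0(\mathbb{R})$ and $Kf$ is bounded non-decreasing for every bounded non-decreasing Borel $f:\mathbb{R}\to\mathbb{R}$. Then for all $u,v\in\mathbb{R}$ and every $f\in\mathcal{C}_{u,v}(\mathbb{R})$, one has $Kf\in\mathcal{C}_{u,v}(\mathbb{R})$.
   Context: $\mathcal{C}_0(\mathbb{R})$ is the space of continuous functions vanishing at $\pm\infty$. For $u,v\in\mathbb{R}$, $\mathcal{C}_{u,v}(\mathbb{R})$ is the set of continuous $f:\mathbb{R}\to\mathbb{R}$ with $\lim_{x\to-\infty}f(x)=u$ and $\lim_{x\to+\infty}f(x)=v$. $Kf(x)=\int f(y)K(x,dy)$. *)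

(* Defs.v *)
From HB Require Import structures.
From mathcomp Require Import all_boot all_order all_algebra.
From mathcomp Require Import all_classical all_reals all_analysis.
Set Implicit Arguments. Unset Strict Implicit. Unset Printing Implicit Defensive.
Import Order.TTheory GRing.Theory Num.Theory.
Import numFieldNormedType.Exports.
Local Open Scope classical_set_scope.
Local Open Scope ring_scope.

(* R is equipped with its Borel sigma-algebra
   (canonical measurableType structure on a realType). *)

Definition kapply (R : realType) (K : R.-pker R ~> R) (f : R -> R) : R -> R :=
  fun x => fine (\int[K x]_y (f y)%:E)%E.

Definition C_lim (R : realType) (u v : R) (f : R -> R) : Prop :=
  continuous f /\ f x @[x --> -oo] --> u /\ f x @[x --> +oo] --> v.

Definition C_zero (R : realType) (f : R -> R) : Prop := C_lim 0 0 f.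

Definition bounded_fun_R (R : realType) (f : R -> R) : Prop :=
  exists M : R, forall x, `|f x| <= M.

Definition nondecreasing_R (R : realType) (f : R -> R) : Prop :=
  forall x y : R, x <= y -> f x <= f y.

(* Main.v *)
Require Import Defs.
From HB Require Import structures.
From mathcomp Require Import all_boot all_order all_algebra.
From mathcomp Require Import all_classical all_reals all_analysis.
From mathcomp Require Import measurable_realfun.
Import Order.TTheory GRing.Theory Num.Theory.
Import numFieldNormedType.Exports.
Local Open Scope classical_set_scope.
Local Open Scope ring_scope.
Set Implicit Arguments. Unset Strict Implicit.

From mathcomp Require Import ring lra.
Definition clamp (R : realType) (t : R) : R := (`|t| - `|t - 1| + 1) / 2.

Lemma clamp_cases (R : realType) (t : R) :
  (t <= 0 /\ clamp t = 0) \/ (0 <= t <= 1 /\ clamp t = t) \/ (1 <= t /\ clamp t = 1).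
Proof.
rewrite /clamp; have [t0|t0] := lerP 0 t; have [t1|t1] := lerP 1 t.
- right; right; split => //.
  have h0 : `|t| = t by apply: ger0_norm.
  have h1 : `|t - 1| = t - 1 by apply: ger0_norm; rewrite subr_ge0.
  lra.
- right; left; split; first by apply/andP; split; lra.
  have h0 : `|t| = t by apply: ger0_norm.
  have h1 : `|t - 1| = 1 - t by rewrite distrC; apply: ger0_norm; rewrite subr_ge0 ltW.
  lra.
- lra.
- left; split; first lra.
  have h0 : `|t| = - t by apply: ltr0_norm.
  have h1 : `|t - 1| = 1 - t by rewrite distrC; apply: ger0_norm; rewrite subr_ge0; lra.
  lra.
Qed.

Lemma clamp01 (R : realType) (t : R) : 0 <= clamp t <= 1.
Proof. apply/andP; case: (clamp_cases t) => [[? ->]|[[/andP[? ?] ->]|[? ->]]]; split; lra. Qed.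

Lemma clamp_norm (R : realType) (t : R) : `|clamp t| <= 1.
Proof. have /andP[h1 h2] := clamp01 t; rewrite ger0_norm //. Qed.

Lemma clamp_le (R : realType) (s t : R) : s <= t -> clamp s <= clamp t.
Proof.
move=> st.
case: (clamp_cases s) => [[? ->]|[[/andP[? ?] ->]|[? ->]]];
case: (clamp_cases t) => [[? ->]|[[/andP[? ?] ->]|[? ->]]]; lra.
Qed.

Lemma clamp0 (R : realType) (t : R) : t <= 0 -> clamp t = 0.
Proof. move=> t0; case: (clamp_cases t) => [[? ->]|[[/andP[? ?] ->]|[? ->]]]; lra. Qed.

Lemma clamp1 (R : realType) (t : R) : 1 <= t -> clamp t = 1.
Proof. move=> t0; case: (clamp_cases t) => [[? ->]|[[/andP[? ?] ->]|[? ->]]]; lra. Qed.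

Lemma clamp_cont (R : realType) : continuous (@clamp R).
Proof.
move=> x; rewrite /clamp.
apply: cvgM; last exact: cvg_cst.
apply: cvgD; last exact: cvg_cst.
apply: cvgB; first exact: cvg_norm.
apply: cvg_norm; apply: cvgB => //; exact: cvg_cst.
Qed.

Definition chiP (R : realType) (n : nat) (y : R) : R := clamp (y - n%:R).
Definition chiN (R : realType) (n : nat) (y : R) : R := clamp (- y - n%:R).

Lemma chiP_cont (R : realType) n : continuous (@chiP R n).
Proof.
move=> x; apply: (@continuous_comp _ _ _ (fun y : R => y - n%:R) (@clamp R)); last exact: clamp_cont.
apply: cvgB => //; exact: cvg_cst.
Qed.

Lemma chiN_cont (R : realType) n : continuous (@chiN R n).
Proof.
move=> x; apply: (@continuous_comp _ _ _ (fun y : R => - y - n%:R) (@clamp R)); last exact: clamp_cont.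
apply: cvgB; last exact: cvg_cst. exact: cvgN.
Qed.

Definition goodf (R : realType) (f : R -> R) :=
  measurable_fun setT f /\ exists M : R, forall y, `|f y| <= M.

Lemma goodP (R : realType) n : goodf (@chiP R n).
Proof. split; first by apply: continuous_measurable_fun; exact: chiP_cont. by exists 1 => y; exact: clamp_norm. Qed.

Lemma goodN (R : realType) n : goodf (@chiN R n).
Proof. split; first by apply: continuous_measurable_fun; exact: chiN_cont. by exists 1 => y; exact: clamp_norm. Qed.
Lemma good_int (R : realType) (K : R.-pker R ~> R) (x : R) (f : R -> R) :
  goodf f -> (K x).-integrable setT (EFin \o f).
Proof.
move=> [mf [M hM]]; apply/integrableP; split; first exact/measurable_EFinP.
apply: le_lt_trans.
  apply: (integral_le_bound (`|M| + 1)%:E) => //; first by apply: measurableT_comp => //; exact/measurable_EFinP.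
  by apply: aeW => z _; rewrite /= lee_fin (le_trans (hM z))// (le_trans (ler_norm M))// lerDl.
by rewrite prob_kernel mule1 ltry.
Qed.

Lemma kD (R : realType) (K : R.-pker R ~> R) (f g : R -> R) x : goodf f -> goodf g ->
  kapply K (fun y => f y + g y) x = kapply K f x + kapply K g x.
Proof. move=> hf hg; exact: (RintegralD _ (good_int K x hf) (good_int K x hg)). Qed.

Lemma kZ (R : realType) (K : R.-pker R ~> R) (f : R -> R) r x : goodf f ->
  kapply K (fun y => r * f y) x = r * kapply K f x.
Proof. move=> hf; apply: RintegralZl => //; exact: good_int. Qed.

Lemma kcst (R : realType) (K : R.-pker R ~> R) (r x : R) :
  kapply K (fun _ => r) x = r.
Proof. by rewrite /kapply -/(Rintegral _ _ _) Rintegral_cst// prob_kernel mulr1. Qed.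

Lemma kle (R : realType) (K : R.-pker R ~> R) (f g : R -> R) x : goodf f -> goodf g ->
  (forall y, f y <= g y) -> kapply K f x <= kapply K g x.
Proof. move=> hf hg fg; exact: (le_Rintegral _ (good_int K x hf) (good_int K x hg)). Qed.

Lemma dctP (R : realType) (K : R.-pker R ~> R) (x : R) :
  kapply K (@chiP R n) x @[n --> \oo] --> 0.
Proof.
have h1 : (K x).-integrable setT (EFin \o (fun _ : R => (1:R))).
  by apply: good_int; split => //; exists 1 => y; rewrite normr1.
have H := @dominated_cvg _ _ _ (K x) setT measurableT (fun n => EFin \o @chiP R n)
  (cst 0%E) (EFin \o (fun _ : R => (1:R))).
have := H _ _ _ h1.
rewrite integral0.
move=> H2; apply: fine_cvg; apply: H2.
- move=> n; apply/measurable_EFinP; exact: (goodP R n).1.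
- move=> y _; apply: cvg_near_cst.
  near=> n.
  rewrite /chiP /= clamp0 //.
  have : y <= n%:R by near: n; exact: nbhs_infty_ger.
  lra.
- by [].
- move=> n y _; rewrite /= lee_fin; exact: clamp_norm.
Unshelve. all: end_near.
Qed.

Lemma dctN (R : realType) (K : R.-pker R ~> R) (x : R) :
  kapply K (@chiN R n) x @[n --> \oo] --> 0.
Proof.
have h1 : (K x).-integrable setT (EFin \o (fun _ : R => (1:R))).
  by apply: good_int; split => //; exists 1 => y; rewrite normr1.
have H := @dominated_cvg _ _ _ (K x) setT measurableT (fun n => EFin \o @chiN R n)
  (cst 0%E) (EFin \o (fun _ : R => (1:R))).
have := H _ _ _ h1.
rewrite integral0.
move=> H2; apply: fine_cvg; apply: H2.
- move=> n; apply/measurable_EFinP; exact: (goodN R n).1.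
- move=> y _; apply: cvg_near_cst.
  near=> n.
  rewrite /chiN /= clamp0 //.
  have : - y <= n%:R by near: n; exact: nbhs_infty_ger.
  lra.
- by [].
- move=> n y _; rewrite /= lee_fin; exact: clamp_norm.
Unshelve. all: end_near.
Qed.

Lemma good_add (R : realType) (f g : R -> R) : goodf f -> goodf g -> goodf (fun y => f y + g y).
Proof.
move=> [mf [M hM]] [mg [N hN]]; split; first exact: measurable_funD.
exists (M + N) => y; apply: le_trans (ler_normD _ _) _; exact: lerD.
Qed.

Lemma good_scal (R : realType) (f : R -> R) r : goodf f -> goodf (fun y => r * f y).
Proof.
move=> [mf [M hM]]; split; first by apply: measurable_funM => //; exact: measurable_cst.
exists (`|r| * M) => y; rewrite normrM; apply: ler_wpM2l => //.
Qed.

Lemma good_cst (R : realType) (r : R) : goodf (fun _ : R => r).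
Proof. split; first exact: measurable_cst. by exists `|r|. Qed.

Lemma kcomb (R : realType) (K : R.-pker R ~> R) (f g : R -> R) a b x :
  goodf f -> goodf g ->
  kapply K (fun y => f y + (a + b * g y)) x = kapply K f x + (a + b * kapply K g x).
Proof.
move=> hf hg.
rewrite kD //; last by apply: good_add; [exact: good_cst| exact: good_scal].
rewrite kD //; [|exact: good_cst| exact: good_scal].
by rewrite kcst kZ.
Qed.

Lemma kP01 (R : realType) (K : R.-pker R ~> R) n x :
  0 <= kapply K (@chiP R n) x <= 1.
Proof.
apply/andP; split.
  rewrite -[X in X <= _](kcst K 0 x); apply: kle; [exact: good_cst|exact: goodP|].
  by move=> y; have /andP[] := clamp01 (y - n%:R).
rewrite -[X in _ <= X](kcst K 1 x); apply: kle; [exact: goodP|exact: good_cst|].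
by move=> y; have /andP[] := clamp01 (y - n%:R).
Qed.

Lemma kN01 (R : realType) (K : R.-pker R ~> R) n x :
  0 <= kapply K (@chiN R n) x <= 1.
Proof.
apply/andP; split.
  rewrite -[X in X <= _](kcst K 0 x); apply: kle; [exact: good_cst|exact: goodN|].
  by move=> y; have /andP[] := clamp01 (- y - n%:R).
rewrite -[X in _ <= X](kcst K 1 x); apply: kle; [exact: goodN|exact: good_cst|].
by move=> y; have /andP[] := clamp01 (- y - n%:R).
Qed.

Section mono.
Variables (R : realType) (K : R.-pker R ~> R).
Hypothesis hmono : forall f : R -> R, measurable_fun setT f -> bounded_fun_R f ->
      nondecreasing_R f ->
      bounded_fun_R (kapply K f) /\ nondecreasing_R (kapply K f).

Lemma kP_mono n x y : x <= y -> kapply K (@chiP R n) x <= kapply K (@chiP R n) y.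
Proof.
move=> xy.
have hnd : nondecreasing_R (@chiP R n).
  move=> a b ab; rewrite /chiP; apply: clamp_le; lra.
have [_ H] := hmono (goodP R n).1 (goodP R n).2 hnd.
exact: H.
Qed.

Lemma kN_anti n x y : x <= y -> kapply K (@chiN R n) y <= kapply K (@chiN R n) x.
Proof.
move=> xy.
have hg := good_scal (-1) (goodN R n).
have hnd : nondecreasing_R (fun y => -1 * @chiN R n y).
  move=> a b ab /=; rewrite /chiN.
  have := clamp_le (s := - b - n%:R) (t := - a - n%:R); lra.
have [_ H] := hmono hg.1 hg.2 hnd.
have := H _ _ xy; rewrite !kZ; try exact: goodN. lra.
Qed.
End mono.

Lemma nrm_helper (R : realType) (a b : R) : `|a| <= `|b - a| + `|b|.
Proof. by have := ler_normD (a - b) b; rewrite subrK distrC. Qed.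

Lemma Clim_bounded (R : realType) (u v : R) (f : R -> R) :
  C_lim u v f -> exists M : R, forall y, `|f y| <= M.
Proof.
move=> [cf [fu fv]].
move/cvgrPdist_le : fu => /(_ 1 ltr01) [M2 [_ HM2]].
move/cvgrPdist_le : fv => /(_ 1 ltr01) [M1 [_ HM1]].
have ab : M2 <= Num.max M1 M2 by rewrite le_max lexx orbT.
have cn : {within `[M2, Num.max M1 M2], continuous (fun y => `|f y|)}.
  apply: continuous_subspaceT => x; apply: cvg_norm; exact: cf.
have [c _ Hc] := EVT_max ab cn.
exists (`|u| + 1 + (`|v| + 1) + `|f c|) => y.
have h0 := normr_ge0 (f c); have hu := normr_ge0 u; have hv := normr_ge0 v.
have [yM1|yM1] := ltrP M1 y.
  have := HM1 _ yM1; have := nrm_helper (f y) v; lra.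
have [yM2|yM2] := ltrP y M2.
  have := HM2 _ yM2; have := nrm_helper (f y) u; lra.
have : `|f y| <= `|f c|.
  apply: Hc; rewrite in_itv /= yM2 /=; rewrite le_max yM1 //.
lra.
Qed.

Lemma key1 (R : realType) (A0 A1 B0 B1 t a b e : R) : 0 < e ->
  `|A0 - A1| <= e / 2 -> 0 <= B0 <= t -> 0 <= B1 <= t -> t * (2 * (`|b| + 1)) <= e ->
  `|(A0 + (a + b * B0)) - (A1 + (a + b * B1))| <= e.
Proof.
move=> e0 hA /andP[h1 h2] /andP[h3 h4] ht.
have -> : (A0 + (a + b * B0)) - (A1 + (a + b * B1)) = (A0 - A1) + b * (B0 - B1) by ring.
apply: le_trans (ler_normD _ _) _; rewrite normrM.
have hk : `|B0 - B1| <= t by rewrite ler_norml; apply/andP; split; lra.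
have := normr_ge0 b; have := normr_ge0 (B0 - B1).
nra.
Qed.

Lemma key2 (R : realType) (A B t a b e : R) : 0 < e ->
  `|0 - A| <= e / 2 -> 0 <= B <= t -> t * (2 * (`|b| + 1)) <= e ->
  `|a - (A + (a + b * B))| <= e.
Proof.
move=> e0 hA /andP[h1 h2] ht.
have -> : a - (A + (a + b * B)) = (0 - A) + (- b) * B by ring.
apply: le_trans (ler_normD _ _) _; rewrite normrM normrN.
have hk : `|B| <= t by rewrite ger0_norm.
have := normr_ge0 b; have := normr_ge0 B.
nra.
Qed.

Lemma kdecomp (R : realType) (K : R.-pker R ~> R) (f g : R -> R) a b x :
  goodf f -> goodf g ->
  kapply K f x = kapply K (fun y => f y + (- a + (- b) * g y)) x + (a + b * kapply K g x).
Proof.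
move=> hf hg.
have hh : goodf (fun y => f y + (- a + (- b) * g y)).
  by apply: good_add => //; apply: good_add; [exact: good_cst| exact: good_scal].
rewrite -kcomb //.
congr (kapply K _ x); apply/funext => y; ring.
Qed.

Lemma Czero_comb (R : realType) (u v : R) (f g : R -> R) a b gm gp :
  C_lim u v f -> continuous g ->
  (\forall y \near -oo, g y = gm) -> (\forall y \near +oo, g y = gp) ->
  u + (- a + (- b) * gm) = 0 -> v + (- a + (- b) * gp) = 0 ->
  C_zero (fun y => f y + (- a + (- b) * g y)).
Proof.
move=> [cf [fu fv]] cg hm hp eu ev; split; [|split].
- move=> x; apply: cvgD; first exact: cf.
  apply: cvgD; first exact: cvg_cst.
  apply: cvgM; [exact: cvg_cst| exact: cg].
- rewrite -eu; apply: cvgD => //.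
  apply: cvgD; first exact: cvg_cst.
  apply: cvgM; [exact: cvg_cst| exact: cvg_near_cst].
- rewrite -ev; apply: cvgD => //.
  apply: cvgD; first exact: cvg_cst.
  apply: cvgM; [exact: cvg_cst| exact: cvg_near_cst].
Qed.

Theorem proposition2p6 (R : realType) (K : R.-pker R ~> R)
  (hC0 : forall f : R -> R, C_zero f -> C_zero (kapply K f))
  (hmono : forall f : R -> R, measurable_fun setT f -> bounded_fun_R f ->
      nondecreasing_R f ->
      bounded_fun_R (kapply K f) /\ nondecreasing_R (kapply K f)) :
  forall (u v : R) (f : R -> R), C_lim u v f -> C_lim u v (kapply K f).
Proof.
move=> u v f hf.
have gf : goodf f.
  split; [exact: continuous_measurable_fun hf.1 | exact: Clim_bounded hf].
have hP : forall n : nat, C_zero (kapply K (fun y => f y + (- u + (- (v - u)) * @chiP R n y))).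
  move=> n; apply: hC0; apply: (@Czero_comb _ u v f _ u (v - u) 0 1) => //.
  - exact: chiP_cont.
  - near=> y; rewrite /chiP clamp0 //.
    suff : y <= 0 by have := ler0n R n; lra.
    near: y; exact: nbhs_ninfty_le.
  - near=> y; rewrite /chiP clamp1 //.
    suff : n%:R + 1 <= y by lra.
    near: y; exact: nbhs_pinfty_ge.
  - ring.
  - ring.
have hN : forall n : nat, C_zero (kapply K (fun y => f y + (- v + (- (u - v)) * @chiN R n y))).
  move=> n; apply: hC0; apply: (@Czero_comb _ u v f _ v (u - v) 1 0) => //.
  - exact: chiN_cont.
  - near=> y; rewrite /chiN clamp1 //.
    suff : y <= - n%:R - 1 by lra.
    near: y; exact: nbhs_ninfty_le.
  - near=> y; rewrite /chiN clamp0 //.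
    suff : 0 <= y by have := ler0n R n; lra.
    near: y; exact: nbhs_pinfty_ge.
  - ring.
  - ring.
have c0 : 0 < 2 * (`|v - u| + 1) by have := normr_ge0 (v - u); lra.
have c1 : 0 < 2 * (`|u - v| + 1) by have := normr_ge0 (u - v); lra.
have tP : forall x e, 0 < e -> exists n : nat,
    kapply K (@chiP R n) x * (2 * (`|v - u| + 1)) <= e.
  move=> x e e0.
  have := (cvgrPdist_le _ _).1 (dctP K x) (e / (2 * (`|v - u| + 1))) (divr_gt0 e0 c0).
  move=> [N _ HN]; exists N; have := HN N (leqnn N).
  rewrite sub0r normrN ger0_norm; last by have /andP[] := kP01 K N x.
  by rewrite ler_pdivlMr.
have tN : forall x e, 0 < e -> exists n : nat,
    kapply K (@chiN R n) x * (2 * (`|u - v| + 1)) <= e.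
  move=> x e e0.
  have := (cvgrPdist_le _ _).1 (dctN K x) (e / (2 * (`|u - v| + 1))) (divr_gt0 e0 c1).
  move=> [N _ HN]; exists N; have := HN N (leqnn N).
  rewrite sub0r normrN ger0_norm; last by have /andP[] := kN01 K N x.
  by rewrite ler_pdivlMr.
have gP n : goodf (@chiP R n) by exact: goodP.
have gN n : goodf (@chiN R n) by exact: goodN.
split; [|split].
- move=> x0; apply/cvgrPdist_le => e e0.
  have [n hn] := tP (x0 + 1) e e0.
  have e2 : 0 < e / 2 by rewrite divr_gt0.
  have h1 := (cvgrPdist_le _ _).1 ((hP n).1 x0) (e / 2) e2.
  have h2 : \forall y \near x0, `|x0 - y| <= 1.
    by apply: ((cvgrPdist_le _ _).1 (@cvg_id _ (nbhs x0))); exact: ltr01.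
  near=> y.
  rewrite (kdecomp K u (v - u) x0 gf (gP n)) (kdecomp K u (v - u) y gf (gP n)).
  apply: (key1 (t := kapply K (@chiP R n) (x0 + 1))) => //.
  + near: y; exact: h1.
  + apply/andP; split; first by have /andP[] := kP01 K n x0.
    apply: (kP_mono hmono); lra.
  + have hy : `|x0 - y| <= 1 by near: y; exact: h2.
    apply/andP; split; first by have /andP[] := kP01 K n y.
    apply: (kP_mono hmono).
    move: hy; rewrite ler_norml; lra.
- apply/cvgrPdist_le => e e0.
  have [n hn] := tP 0 e e0.
  have e2 : 0 < e / 2 by rewrite divr_gt0.
  have h1 := (cvgrPdist_le _ _).1 (hP n).2.1 (e / 2) e2.
  near=> y.
  rewrite (kdecomp K u (v - u) y gf (gP n)).
  apply: (key2 (t := kapply K (@chiP R n) 0)) => //.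
  + near: y; exact: h1.
  + apply/andP; split; first by have /andP[] := kP01 K n y.
    apply: (kP_mono hmono).
    near: y; exact: nbhs_ninfty_le.
- apply/cvgrPdist_le => e e0.
  have [n hn] := tN 0 e e0.
  have e2 : 0 < e / 2 by rewrite divr_gt0.
  have h1 := (cvgrPdist_le _ _).1 (hN n).2.2 (e / 2) e2.
  near=> y.
  rewrite (kdecomp K v (u - v) y gf (gN n)).
  apply: (key2 (t := kapply K (@chiN R n) 0)) => //.
  + near: y; exact: h1.
  + apply/andP; split; first by have /andP[] := kN01 K n y.
    apply: (kN_anti hmono).
    near: y; exact: nbhs_pinfty_ge.
Unshelve. all: end_near.
Qed.
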